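(* Let $R$ be a (unital, not necessarily commutative) ring, considered as a first-order structure in the language of rings. If either $R$ has characteristic zero or $R$ is an infinite domain (a ring without zero divisors), then $R$ does not have near linear Zarankiewicz bounds.
   Context: For a bipartite graph with vertex sorts $V,W$ and edge relation $E\subseteq V\times W$, it is $K_{m,n}$-free if it contains no complete bipartite subgraph with parts of sizes $m$ and $n$. A class $\mathcal{C}$ of finite bipartite graphs has near linear Zarankiewicz bounds if for every $m$ and every real $\varepsilon>0$ there is a real $\lambda>0$ such that every $K_{m,m}$-free member $\mathcal{G}$ of $\mathcal{C}$ has at most $\lambda|\mathcal{G}|^{1+\varepsilon}$ edges, where $|\mathcal{G}|$ is the number of vertices. A bipartite graph has near linear Zarankiewicz bounds if the class of its finite substructures does; a structure has near linear Zarankiewicz bounds if every bipartite graph definable (with parameters) in it does. *)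

(* Defs.v *)
From mathcomp Require Import all_boot all_algebra.
From Stdlib Require Rdefinitions Raxioms Rpower ClassicalEpsilon.

Set Implicit Arguments.
Unset Strict Implicit.
Unset Printing Implicit Defensive.

Import GRing.Theory.

(* A bipartite graph: vertex sorts are the subsets [inV] of [V] and [inW]
   of [W]; the edge relation is [E] (only considered on inV x inW). *)
Section Bipartite.
Variables (V W : eqType) (inV : V -> Prop) (inW : W -> Prop) (E : V -> W -> Prop).

Definition edgeb (a : V) (b : W) : bool :=
  if ClassicalEpsilon.excluded_middle_informative (E a b) then true else false.

(* A finite substructure is given by finite duplicate-free lists A, B of
   vertices of the two sorts, with the induced edge relation. *)
Definition fin_sub (A : seq V) (B : seq W) : Prop :=
  uniq A /\ uniq B /\ (forall a, a \in A -> inV a) /\ (forall b, b \in B -> inW b).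

Definition nverts (A : seq V) (B : seq W) : nat := size A + size B.

Definition nedges (A : seq V) (B : seq W) : nat :=
  \sum_(a <- A) count (fun b => edgeb a b) B.

Definition Kfree (m n : nat) (A : seq V) (B : seq W) : Prop :=
  ~ exists (A' : seq V) (B' : seq W),
      uniq A' /\ size A' = m /\ {subset A' <= A} /\
      uniq B' /\ size B' = n /\ {subset B' <= B} /\
      (forall a b, a \in A' -> b \in B' -> E a b).

Definition near_linear_zarankiewicz : Prop :=
  forall (m : nat) (eps : Rdefinitions.R), Rdefinitions.Rlt (Rdefinitions.IZR BinNums.Z0) eps ->
    exists lam : Rdefinitions.R, Rdefinitions.Rlt (Rdefinitions.IZR BinNums.Z0) lam /\
      forall (A : seq V) (B : seq W), fin_sub A B -> Kfree m m A B ->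
        Rdefinitions.Rle (Raxioms.INR (nedges A B))
          (Rdefinitions.Rmult lam
             (Rpower.Rpower (Raxioms.INR (nverts A B))
                (Rdefinitions.Rplus (Rdefinitions.IZR (BinNums.Zpos BinNums.xH)) eps))).
End Bipartite.

Section RingLogic.
Variable R : pzRingType.

Inductive rterm : Type :=
| TVar of nat
| TParam of R
| TZero
| TOne
| TAdd of rterm & rterm
| TOpp of rterm
| TMul of rterm & rterm.

Inductive rformula : Type :=
| FEq of rterm & rterm
| FNot of rformula
| FAnd of rformula & rformula
| FOr of rformula & rformula
| FExists of nat & rformula
| FForall of nat & rformula.

Fixpoint teval (e : nat -> R) (t : rterm) : R :=
  match t with
  | TVar i => e i
  | TParam r => r
  | TZero => 0%R
  | TOne => 1%R
  | TAdd t1 t2 => (teval e t1 + teval e t2)%R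
  | TOpp t1 => (- teval e t1)%R
  | TMul t1 t2 => (teval e t1 * teval e t2)%R
  end.

Definition upd (e : nat -> R) (i : nat) (x : R) : nat -> R :=
  fun j => if j == i then x else e j.

Fixpoint fholds (e : nat -> R) (f : rformula) : Prop :=
  match f with
  | FEq t1 t2 => teval e t1 = teval e t2
  | FNot g => ~ fholds e g
  | FAnd g h => fholds e g /\ fholds e h
  | FOr g h => fholds e g \/ fholds e h
  | FExists i g => exists x : R, fholds (upd e i x) g
  | FForall i g => forall x : R, fholds (upd e i x) g
  end.

(* environment assigning the entries of s to variables 0,1,..., and 0 to
   the remaining variables *)
Definition env_of (s : seq R) : nat -> R := fun i => nth 0%R s i.

(* the subset of R^k defined by f, in the free variables 0..k-1 *)
Definition defset (k : nat) (f : rformula) (x : k.-tuple R) : Prop :=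
  fholds (env_of x) f.

(* the relation on R^k x R^l defined by f, in variables 0..k+l-1 *)
Definition defrel (k l : nat) (f : rformula) (x : k.-tuple R) (y : l.-tuple R) : Prop :=
  fholds (env_of (x ++ y)) f.

(* A ring has near linear Zarankiewicz bounds if every bipartite graph
   definable with parameters in it has: vertex sorts V subset R^k and
   W subset R^l defined by fV, fW, edge relation E subset V x W defined
   by fE. *)
Definition ring_NLZB : Prop :=
  forall (k l : nat) (fV fW fE : rformula),
    near_linear_zarankiewicz (@defset k fV) (@defset l fW) (@defrel k l fE).
End RingLogic.

Definition char_zero (R : pzRingType) : Prop := forall n : nat, ((n.+1)%:R)%R <> 0%R :> R.

Definition no_zero_divisors (R : pzRingType) : Prop :=
  forall a b : R, (a * b)%R = 0%R -> a = 0%R \/ b = 0%R.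

Definition infinite_type (T : eqType) : Prop := ~ exists s : seq T, forall x : T, x \in s.

(* Main.v *)
Require Import Defs.
From HB Require Import structures.
From mathcomp Require Import all_boot all_order all_algebra all_field.
From mathcomp Require Import zify.
From Stdlib Require Reals Lra ZArith.
Set Implicit Arguments. Unset Strict Implicit. Unset Printing Implicit Defensive.

Module RealPart.
Import Stdlib.Reals.Reals Stdlib.micromega.Lra Stdlib.ZArith.ZArith.
Local Open Scope R_scope.
Lemma real_bound (lam : R) : 0 < lam -> exists S : nat, forall s n e : nat,
  leq S s -> leq s n -> leq n (muln 3 (expn s 3)) -> leq (muln s n) (muln 3 e) ->
  INR e <= lam * Rpower (INR n) (IZR 1 + / 6) -> False.
Proof.
move=> lam0.
pose r := 27 * lam ^ 3 + 3.
exists (Z.to_nat (up r)).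
move=> s n e hS hsn hn hse hb.
have Hr : r < INR s.
  have [h1 _] := archimed r.
  have h0 : (0 <= up r)%Z.
    apply: le_IZR; apply: Rle_trans (Rlt_le _ _ h1). rewrite /r; nra.
  apply: (Rlt_le_trans _ _ _ h1).
  rewrite -(Z2Nat.id _ h0) -INR_IZR_INZ. apply: le_INR. by apply/leP.
have s0 : 0 < INR s by rewrite /r in Hr; nra.
have n0 : 0 < INR n.
  apply: Rlt_le_trans s0 _; apply: le_INR; by apply/leP.
have Hn : INR n <= 3 * INR s ^ 3.
  have := le_INR _ _ (elimT leP hn). rewrite !expnS expn0 muln1 -!multE !mult_INR /=.
  replace (INR 3) with 3 by (simpl; lra). lra.
have Hse : INR s * INR n <= 3 * INR e.
  have := le_INR _ _ (elimT leP hse). rewrite -!multE !mult_INR.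
  replace (INR 3) with 3 by (simpl; lra). lra.
pose u := Rpower (INR s) (/ 3).
have u0 : 0 < u by rewrite /u /Rpower; apply: exp_pos.
have u3 : u ^ 3 = INR s.
  rewrite /u -Rpower_pow // Rpower_mult.
  replace (/ 3 * INR 3) with 1 by (simpl; field).
  by rewrite Rpower_1.
have Hpow : Rpower (INR n) (IZR 1 + / 6) <= INR n * (u * u).
  rewrite Rpower_plus Rpower_1 //.
  apply: Rmult_le_compat_l; first lra.
  have h4 : INR n <= INR s ^ 4.
    have h3 : 3 <= INR s by rewrite /r in Hr; nra.
    have : 3 * INR s ^ 3 <= INR s * INR s ^ 3.
      apply: Rmult_le_compat_r => //; apply: pow_le; lra.
    simpl in *; lra.
  apply: Rle_trans (Rle_Rpower_l _ _ _ _ (conj n0 h4)) _; first lra.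
  rewrite -Rpower_pow // Rpower_mult /u -Rpower_plus.
  replace (INR 4 * / 6) with (/3 + /3) by (simpl; field).
  lra.
have hu : 3 * lam < u.
  apply: Rnot_le_lt => h.
  have : u ^ 3 <= (3 * lam) ^ 3 by apply: pow_incr; lra.
  rewrite u3 /r in Hr *. nra.
have : INR s * INR n <= 3 * (lam * (INR n * (u * u))).
  apply: Rle_trans Hse _. apply: Rmult_le_compat_l; first lra.
  apply: Rle_trans hb _. apply: Rmult_le_compat_l; lra.
rewrite -u3. move=> h.
have : u * u * INR n * (u - 3 * lam) <= 0 by nra.
have : 0 < u * u * INR n * (u - 3 * lam).
  apply: Rmult_lt_0_compat; last lra.
  apply: Rmult_lt_0_compat; nra.
lra.
Qed.
Lemma inv6_pos : 0 < / 6. Proof. lra. Qed.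
End RealPart.

Import GRing.Theory.
Local Open Scope ring_scope.

Section Graph.
Variable R : pzRingType.

Definition fT : rformula R := FEq (TZero R) (TZero R).
Definition fE : rformula R := FEq (TVar R 3) (TAdd (TMul (TVar R 0) (TVar R 2)) (TVar R 1)).

Lemma defrelE (a b x y : R) : defrel fE [tuple a; b] [tuple x; y] <-> y = a * x + b.
Proof. by rewrite /defrel /=. Qed.

Lemma edgebP (V W : eqType) (E : V -> W -> Prop) a b : edgeb E a b <-> E a b.
Proof. rewrite /edgeb; by case: ClassicalEpsilon.excluded_middle_informative. Qed.

Lemma add_ident (y1 y2 b1 b2 : R) : ((y1 - b1) - (y2 - b1)) - ((y1 - b2) - (y2 - b2)) = 0.
Proof. by rewrite !opprB !addrA !subrK subrr. Qed.

Variables (A B C : seq R).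
Hypotheses (uA : uniq A) (uB : uniq B) (uC : uniq C).
Hypothesis good : forall a1 a2 x1 x2, a1 \in A -> a2 \in A -> x1 \in A -> x2 \in A ->
  (a1 - a2) * (x1 - x2) = 0 -> a1 = a2 \/ x1 = x2.
Hypothesis clos : forall a x b, a \in A -> x \in A -> b \in B -> a * x + b \in C.

Definition Vl : seq (2.-tuple R) := [seq [tuple a; b] | a <- A, b <- B].
Definition Wl : seq (2.-tuple R) := [seq [tuple x; y] | x <- A, y <- C].

Lemma tuple2_inj (a b a' b' : R) : [tuple a; b] = [tuple a'; b'] -> a = a' /\ b = b'.
Proof. by move=> /(congr1 val) [-> ->]. Qed.

Lemma uniq_pairs (X Y : seq R) : uniq X -> uniq Y -> uniq [seq [tuple x; y] | x <- X, y <- Y].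
Proof.
move=> uX uY; apply: allpairs_uniq => // [[x y]] [x' y'] _ _ /= /tuple2_inj [-> ->] //.
Qed.

Lemma mem_pairs (X Y : seq R) v : v \in [seq [tuple x; y] | x <- X, y <- Y] ->
  exists x y, [/\ x \in X, y \in Y & v = [tuple x; y]].
Proof. by case/allpairsP => [[x y]] /= [hx hy ->]; exists x, y. Qed.

Lemma graph_fin : fin_sub (defset fT) (defset fT) Vl Wl.
Proof. by split; [exact: uniq_pairs | split; [exact: uniq_pairs | split]]. Qed.

Lemma in2l (T : eqType) (x y : T) : x \in [:: x; y]. Proof. by rewrite mem_head. Qed.
Lemma in2r (T : eqType) (x y : T) : y \in [:: x; y]. Proof. by rewrite !inE eqxx orbT. Qed.

Lemma graph_Kfree : Kfree (defrel fE) 2 2 Vl Wl.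
Proof.
case=> A' [B' [uA' [sA' [subA [uB' [sB' [subB hE]]]]]]].
case: A' uA' sA' subA hE => [|v1 [|v2 [|? ?]]] //= uA' _ subA.
case: B' uB' sB' subB => [|w1 [|w2 [|? ?]]] //= uB' _ subB hE.
have [a1 [b1 [ha1 hb1 ev1]]] := mem_pairs (subA v1 (in2l _ _)).
have [a2 [b2 [ha2 hb2 ev2]]] := mem_pairs (subA v2 (in2r _ _)).
have [x1 [y1 [hx1 hy1 ew1]]] := mem_pairs (subB w1 (in2l _ _)).
have [x2 [y2 [hx2 hy2 ew2]]] := mem_pairs (subB w2 (in2r _ _)).
subst.
have /defrelE e11 := hE _ _ (in2l _ _) (in2l _ _).
have /defrelE e12 := hE _ _ (in2l _ _) (in2r _ _).
have /defrelE e21 := hE _ _ (in2r _ _) (in2l _ _).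
have /defrelE e22 := hE _ _ (in2r _ _) (in2r _ _).
have key : (a1 - a2) * (x1 - x2) = 0.
  rewrite mulrBl !mulrBr.
  have -> : a1 * x1 = y1 - b1 by rewrite e11 addrK.
  have -> : a1 * x2 = y2 - b1 by rewrite e12 addrK.
  have -> : a2 * x1 = y1 - b2 by rewrite e21 addrK.
  have -> : a2 * x2 = y2 - b2 by rewrite e22 addrK.
  exact: add_ident.
case: (good ha1 ha2 hx1 hx2 key) => h.
- rewrite -h in e21 uA'.
  have hb : b1 = b2 by apply: (@addrI _ (a1 * x1)); rewrite -e11 -e21.
  rewrite -hb in uA'; move: uA'; by rewrite /= inE eqxx.
- rewrite -h in e12 uB'.
  have hy : y1 = y2 by rewrite e11 e12.
  rewrite -hy in uB'; move: uB'; by rewrite /= inE eqxx.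
Qed.

Lemma graph_nverts : nverts Vl Wl = (size A * size B + size A * size C)%N.
Proof. by rewrite /nverts !size_allpairs. Qed.

Lemma graph_nedges : (size A * size A * size B <= nedges (defrel fE) Vl Wl)%N.
Proof.
rewrite /nedges.
have H : forall v, v \in Vl -> (size A <= count (fun w => edgeb (defrel fE) v w) Wl)%N.
  move=> v /mem_pairs [a [b [ha hb ->]]].
  rewrite -size_filter.
  have -> : size A = size [seq [tuple x; a * x + b] | x <- A] by rewrite size_map.
  apply: uniq_leq_size.
    rewrite map_inj_uniq // => x x' /tuple2_inj [] //.
  move=> w /mapP [x hx ->]; rewrite mem_filter; apply/andP; split.
    by apply/edgebP/defrelE.
  by apply/allpairsP; exists (x, a * x + b); split => //; apply: clos.
apply: (@leq_trans (\sum_(v <- Vl) size A)).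
  by rewrite big_const_seq iter_addn_0 count_predT size_allpairs mulnA.
rewrite [leqLHS]big_seq_cond [leqRHS]big_seq_cond; apply: leq_sum => v /andP[hv _]; exact: H.
Qed.
End Graph.
Section C0.
Variable R : pzRingType.
Hypothesis c0 : char_zero R.

Lemma c0_int (z : int) : z%:~R = 0 :> R -> z = 0.
Proof.
case: z => n /=.
  case: n => // n; rewrite /intmul /= => h; by case: (c0 h).
rewrite NegzE mulrNz => /eqP; rewrite oppr_eq0 => /eqP h; by case: (c0 h).
Qed.

Lemma c0_nat_inj (i j : nat) : i%:R = j%:R :> R -> i = j.
Proof.
move=> h; have : (i%:Z - j%:Z)%:~R = 0 :> R by rewrite intrD intrN -!pmulrn h subrr.
move/c0_int/eqP; rewrite subr_eq0 => /eqP; by case.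
Qed.

Lemma c0_good (i1 i2 j1 j2 : nat) :
  (i1%:R - i2%:R) * (j1%:R - j2%:R) = 0 :> R -> i1 = i2 \/ j1 = j2.
Proof.
move=> h.
have : ((i1%:Z - i2%:Z) * (j1%:Z - j2%:Z))%:~R = 0 :> R.
  by rewrite intrM !intrD !intrN -!pmulrn.
move/c0_int/eqP; rewrite mulf_eq0 !subr_eq0 => /orP [] /eqP [] ->; by [left|right].
Qed.

Definition nats (k : nat) : seq R := [seq i%:R | i <- iota 0 k].

Lemma nats_uniq k : uniq (nats k).
Proof. rewrite map_inj_uniq ?iota_uniq //; exact: c0_nat_inj. Qed.

Lemma mem_nats k x : x \in nats k -> exists2 i, (i < k)%N & x = i%:R.
Proof. by case/mapP => i; rewrite mem_iota add0n => /andP[_ hi] ->; exists i. Qed.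

Lemma nats_mem k i : (i < k)%N -> i%:R \in nats k.
Proof. by move=> hi; apply: map_f; rewrite mem_iota. Qed.
End C0.

Definition good_list (R : pzRingType) (A : seq R) := forall a1 a2 x1 x2, a1 \in A -> a2 \in A -> x1 \in A -> x2 \in A ->
  (a1 - a2) * (x1 - x2) = 0 -> a1 = a2 \/ x1 = x2.

Definition has_structs (R : pzRingType) := forall L : nat, exists (A B C : seq R),
  [/\ uniq A, uniq B, uniq C, good_list A & 
  [/\ (forall a x b, a \in A -> x \in A -> b \in B -> a * x + b \in C),
      (size C <= 2 * size B)%N, (size B <= size A * size A)%N, (0 < size B)%N & (L <= size A)%N]].

Lemma structs_not_NLZB (R : pzRingType) : has_structs R -> ~ ring_NLZB R.
Proof.
move=> HS HN.
have pos6 := RealPart.inv6_pos.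
have [lam [lam0 hb]] := HN 2%N 2%N (fT R) (fT R) (fE R) 2%N _ pos6.
have [S hS] := RealPart.real_bound lam0.
have [A [B [C [uA uB uC gA [cl hC hB hB0 hL]]]]] := HS S.
have := hb _ _ (graph_fin uA uB uC) (@graph_Kfree R A B C gA).
rewrite graph_nverts => hE.
apply: (hS (size A) _ (nedges (defrel (fE R)) (Vl A B) (Wl A C)) hL _ _ _ hE).
- nia.
- nia.
- have := graph_nedges uA cl. nia.
Qed.

Lemma c0_structs (R : pzRingType) : char_zero R -> has_structs R.
Proof.
move=> c0 L; set k := L.+1.
exists (nats R k), (nats R (k * k)), (nats R (2 * (k * k))).
have sz m : size (nats R m) = m by rewrite size_map size_iota.
split; try exact: nats_uniq.
- move=> a1 a2 x1 x2 /mem_nats [i1 _ ->] /mem_nats [i2 _ ->] /mem_nats [j1 _ ->] /mem_nats [j2 _ ->].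
  by case/(c0_good c0) => ->; [left|right].
split; rewrite ?sz //.
- move=> a x b /mem_nats [i hi ->] /mem_nats [j hj ->] /mem_nats [l hl ->].
  rewrite -natrM -natrD; apply: nats_mem; nia.
Qed.

Section Polys.
Variable V : pzRingType.

Lemma sum_in (S : seq V) : 0 \in S -> (forall u v, u \in S -> v \in S -> u + v \in S) ->
  forall (I : Type) (r : seq I) (P : pred I) (F : I -> V), (forall i, P i -> F i \in S) ->
  \sum_(i <- r | P i) F i \in S.
Proof. move=> h0 hD I r P F hF; by apply: (big_ind (fun x => x \in S)). Qed.

Variable p : nat.
Hypothesis hp : p.+1%:R = 0 :> V.

Lemma opp_in (S : seq V) : 0 \in S -> (forall u v, u \in S -> v \in S -> u + v \in S) ->
  forall u, u \in S -> - u \in S.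
Proof.
move=> h0 hD u hu.
have -> : - u = u *+ p.
  have h : u *+ p.+1 = 0 by rewrite -mulr_natl hp mul0r.
  by apply/eqP; rewrite eq_sym -addr_eq0 -mulrSr h.
elim: p => [|n IH]; first by rewrite mulr0n.
by rewrite mulrS; apply: hD.
Qed.

Lemma natr_modp m : (m %% p.+1)%:R = m%:R :> V.
Proof. by rewrite {2}(divn_eq m p.+1) natrD natrM hp mulr0 add0r. Qed.

Definition evp (t : V) d (c : {ffun 'I_d -> 'I_p.+1}) : V := \sum_(i < d) (c i : nat)%:R * t ^+ i.
Definition Apd (t : V) d : seq V := [seq evp t c | c <- enum {ffun 'I_d -> 'I_p.+1}].

Lemma ApdP t d u : reflect (exists c : {ffun 'I_d -> 'I_p.+1}, u = evp t c) (u \in Apd t d).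
Proof.
apply: (iffP mapP) => [[c _ ->]|[c ->]]; first by exists c.
by exists c; rewrite ?mem_enum.
Qed.

Lemma Apd_in t d (c : {ffun 'I_d -> 'I_p.+1}) : evp t c \in Apd t d.
Proof. by apply/ApdP; exists c. Qed.

Lemma Apd0 t d : 0 \in Apd t d.
Proof.
apply/ApdP; exists [ffun=> ord0]; rewrite /evp big1 // => i _; by rewrite ffunE mul0r.
Qed.

Lemma ApdD t d u v : u \in Apd t d -> v \in Apd t d -> u + v \in Apd t d.
Proof.
move=> /ApdP [c ->] /ApdP [c' ->]; apply/ApdP.
exists [ffun i => inZp (c i + c' i)]; rewrite /evp -big_split /=.
apply: eq_bigr => i _; by rewrite ffunE /= natr_modp natrD mulrDl.
Qed.

Lemma Apd_mono t d m l : (l < d)%N -> m%:R * t ^+ l \in Apd t d.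
Proof.
move=> hl; apply/ApdP; exists [ffun i : 'I_d => if val i == l then inZp m else ord0].
rewrite /evp (bigD1 (Ordinal hl)) //= big1 ?addr0.
  by rewrite ffunE /= eqxx /= natr_modp.
move=> i /negbTE hi; rewrite ffunE; case: eqP => [e|_]; last by rewrite mul0r.
have ei : i = Ordinal hl by apply: val_inj; rewrite /= e.
by move: hi; rewrite ei eqxx.

Qed.

Lemma evp_mul t d (c c' : {ffun 'I_d -> 'I_p.+1}) : evp t c * evp t c' =
  \sum_(i < d) \sum_(j < d) ((c i : nat) * (c' j))%:R * t ^+ (i + j).
Proof.
rewrite /evp mulr_suml; apply: eq_bigr => i _; rewrite mulr_sumr; apply: eq_bigr => j _.
by rewrite natrM exprD !mulrA -(mulrA _ (t ^+ i)) (commr_nat (t ^+ i)) !mulrA.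
Qed.

Lemma evp_comm t d (c c' : {ffun 'I_d -> 'I_p.+1}) : evp t c * evp t c' = evp t c' * evp t c.
Proof.
rewrite !evp_mul exchange_big /=; apply: eq_bigr => i _; apply: eq_bigr => j _.
by rewrite mulnC addnC.
Qed.

End Polys.

Section Struct12.
Variable V : pzRingType.
Variable p : nat.
Hypothesis hp : p.+1%:R = 0 :> V.
Hypothesis dom : no_zero_divisors V.

Lemma dom_good (A : seq V) : good_list A.
Proof.
move=> a1 a2 x1 x2 _ _ _ _ /dom [] /eqP; rewrite subr_eq0 => /eqP ->; by [left|right].
Qed.

Lemma evp_split (t : V) d (c : {ffun 'I_(d + d) -> 'I_p.+1}) :
  evp t c = evp t [ffun i : 'I_d => c (lshift d i)] + t ^+ d * evp t [ffun i : 'I_d => c (rshift d i)].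
Proof.
rewrite /evp big_split_ord /=; congr (_ + _).
  by apply: eq_bigr => i _; rewrite ffunE.
rewrite mulr_sumr; apply: eq_bigr => i _; by rewrite ffunE /= exprD !mulrA (commr_nat (t ^+ d)).
Qed.

Lemma struct12 (t : V) d : exists (A B C : seq V),
  [/\ uniq A, uniq B, uniq C, good_list A & 
  [/\ (forall a x b, a \in A -> x \in A -> b \in B -> a * x + b \in C),
      (size C <= 2 * size B)%N, (size B <= size A * size A)%N, (0 < size B)%N & (size (undup (Apd p t d)) <= size A)%N]].
Proof.
exists (undup (Apd p t d)), (undup (Apd p t (d + d))), (undup (Apd p t (d + d))).
split; rewrite ?undup_uniq //; first exact: dom_good.
split => //.
- move=> a x b; rewrite !mem_undup => /ApdP [c ->] /ApdP [c' ->] hb.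
  apply: ApdD => //; rewrite evp_mul.
  apply: sum_in; [exact: Apd0|exact: ApdD|] => i _.
  apply: sum_in; [exact: Apd0|exact: ApdD|] => j _.
  apply: Apd_mono => //; have := ltn_ord i; have := ltn_ord j; lia.
- lia.
- rewrite -(size_allpairs (fun u v => u + t ^+ d * v)); apply: uniq_leq_size; first exact: undup_uniq.
  move=> u; rewrite mem_undup => /ApdP [c ->]; rewrite evp_split.
  apply/allpairsP; eexists (_, _); split; last reflexivity; rewrite /= mem_undup; exact: Apd_in.
- rewrite lt0n size_eq0; apply/eqP => h; have := Apd0 p t (d + d); by rewrite -mem_undup h.
Qed.
End Struct12.

Section Herst.
Variable R : pzRingType.
Variable p : nat.
Hypothesis hp : p.+1%:R = 0 :> R.
Hypothesis dom : no_zero_divisors R.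
Variable N : nat.
Hypothesis N2 : (1 < N)%N.
Hypothesis HN : forall x : R, x != 0 -> x ^+ N = 1.
Hypothesis H1 : (1:R) != 0.

Definition Dn : Type := R.
HB.instance Definition _ := GRing.PzRing.on Dn.
HB.instance Definition _ := GRing.PzSemiRing_isNonZero.Build Dn H1.

Definition Dunit : pred Dn := fun x => x != 0.
Definition Dinv (x : Dn) : Dn := if x != 0 then x ^+ N.-1 else x.

Lemma Dn_mulVr : {in Dunit, left_inverse 1 Dinv *%R}.
Proof. move=> x Hx; have x0 : x != 0 := Hx; rewrite /Dinv x0 -exprSr prednK ?HN //; exact: ltnW. Qed.
Lemma Dn_divrr : {in Dunit, right_inverse 1 Dinv *%R}.
Proof. move=> x Hx; have x0 : x != 0 := Hx; rewrite /Dinv x0 -exprS prednK ?HN //; exact: ltnW. Qed.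
Lemma Dn_unitrP : forall x y : Dn, y * x = 1 /\ x * y = 1 -> Dunit x.
Proof. move=> x y [_ h]; rewrite /Dunit; apply/eqP => x0; move: h; rewrite x0 mul0r => h; by move: H1; rewrite -h eqxx. Qed.
Lemma Dn_invr_out : {in [predC Dunit], Dinv =1 id}.
Proof. move=> x Hx; have x0 : ~~ (x != 0) := Hx; by rewrite /Dinv (negbTE x0). Qed.
HB.instance Definition _ := GRing.NzRing_hasMulInverse.Build Dn Dn_mulVr Dn_divrr Dn_unitrP Dn_invr_out.

Lemma DinvE (x : Dn) : x^-1 = Dinv x. Proof. by []. Qed.

Lemma domD (x y : Dn) : x * y = 0 -> x = 0 \/ y = 0. Proof. exact: dom. Qed.

Lemma expr_modN (x : Dn) m : x != 0 -> x ^+ m = x ^+ (m %% N).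
Proof.
move=> x0; rewrite {1}(divn_eq m N) exprD mulnC exprM HN // expr1n mul1r //.
Qed.

Lemma pow_in (S : seq Dn) : 1 \in S -> (forall u v, u \in S -> v \in S -> u * v \in S) ->
  forall x n, x \in S -> x ^+ n \in S.
Proof. move=> h1 hM x n hx; elim: n => [|n IH]; rewrite ?expr0 // exprS; exact: hM. Qed.

Lemma inv_in (S : seq Dn) : 1 \in S -> (forall u v, u \in S -> v \in S -> u * v \in S) ->
  forall x, x \in S -> x^-1 \in S.
Proof. move=> h1 hM x hx; rewrite DinvE /Dinv; case: ifP => // _; exact: pow_in. Qed.

Section Central.
Variables a b : Dn.
Hypothesis hab : a * b != b * a.

Lemma a_neq0 : a != 0.
Proof. by apply: contra hab => /eqP ->; rewrite mul0r mulr0. Qed.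

Definition Kl : seq Dn := Apd p a N.

Lemma K0 : 0 \in Kl. Proof. exact: Apd0. Qed.
Lemma KD u v : u \in Kl -> v \in Kl -> u + v \in Kl. Proof. exact: ApdD. Qed.
Lemma Knat n : n%:R \in Kl.
Proof. have := @Apd_mono _ p hp a N n 0 (ltnW N2); by rewrite expr0 mulr1. Qed.
Lemma K1 : 1 \in Kl. Proof. exact: (Knat 1). Qed.
Lemma Ka : a \in Kl.
Proof. have := @Apd_mono _ p hp a N 1 1 N2; by rewrite expr1 mul1r. Qed.
Lemma KM u v : u \in Kl -> v \in Kl -> u * v \in Kl.
Proof.
move=> /ApdP [c ->] /ApdP [c' ->]; rewrite evp_mul.
apply: sum_in; [exact: K0|exact: KD|] => i _.
apply: sum_in; [exact: K0|exact: KD|] => j _.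
rewrite (expr_modN _ a_neq0); apply: Apd_mono => //; apply: ltn_pmod; exact: ltnW.
Qed.
Lemma KN u : u \in Kl -> - u \in Kl.
Proof. apply: (opp_in hp); [exact: K0|exact: KD]. Qed.
Lemma KB u v : u \in Kl -> v \in Kl -> u - v \in Kl.
Proof. by move=> hu hv; apply: KD => //; apply: KN. Qed.
Lemma Kcomm u v : u \in Kl -> v \in Kl -> u * v = v * u.
Proof. move=> /ApdP [c ->] /ApdP [c' ->]; exact: evp_comm. Qed.

Lemma Kclosed : subring_closed (fun x : Dn => x \in Kl).
Proof. split; [exact: K1|exact: KB|exact: KM]. Qed.
Lemma Kdiv : divring_closed (fun x : Dn => x \in Kl).
Proof. split; [exact: K1|exact: KB|] => u v hu hv; apply: KM => //; apply: inv_in => //; [exact: K1|exact: KM]. Qed.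

Definition KT := seq_sub Kl.
HB.instance Definition _ := SubType.on KT.
HB.instance Definition _ := Finite.on KT.
HB.instance Definition _ := GRing.SubChoice_isSubNzRing.Build Dn _ KT Kclosed.
HB.instance Definition _ := GRing.SubNzRing_isSubUnitRing.Build Dn _ KT Kdiv.
Lemma KT_comm : @commutative KT KT *%R.
Proof. move=> x y; apply: val_inj; rewrite /=; apply: Kcomm; exact: valP. Qed.
HB.instance Definition _ := GRing.PzRing_hasCommutativeMul.Build KT KT_comm.
Lemma KT_dom : GRing.integral_domain_axiom KT.
Proof.
move=> x y /eqP; rewrite -val_eqE /= => /eqP /domD [] h; apply/orP; [left|right];
  by rewrite -val_eqE /= h.
Qed.
HB.instance Definition _ := GRing.ComUnitRing_isIntegral.Build KT KT_dom.
Lemma KT_field : GRing.field_axiom KT.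
Proof. move=> x x0; rewrite qualifE /=; move: x0; by rewrite -val_eqE. Qed.
HB.instance Definition _ := GRing.UnitRing_isField.Build KT KT_field.

Definition ka : KT := SeqSub Ka.

Definition Ev (P : {poly KT}) (y : Dn) : Dn := \sum_(i < size P) val (P`_i) * (y * a ^+ i).

Lemma Ev_ext (P : {poly KT}) y n : (size P <= n)%N -> Ev P y = \sum_(i < n) val (P`_i) * (y * a ^+ i).
Proof.
move=> hn; rewrite /Ev (big_ord_widen n (fun i => val (P`_i) * (y * a ^+ i)) hn).
rewrite big_mkcond; apply: eq_bigr => i _; case: ifP => // /negbT.
by rewrite -leqNgt => h; rewrite nth_default // mul0r.
Qed.

Lemma EvB (P P' : {poly KT}) y : Ev (P - P') y = Ev P y - Ev P' y.
Proof.
set n := maxn (size P) (size P').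
rewrite (Ev_ext y (leq_maxl (size P) (size P'))) (Ev_ext y (leq_maxr (size P) (size P'))).
have hs : (size (P - P')%R <= n)%N by have := size_polyD P (- P'); rewrite size_polyN.
rewrite (Ev_ext y hs) -sumrB.
by apply: eq_bigr => i _; rewrite coefB /= mulrBl.
Qed.

Lemma Ev_yB (P : {poly KT}) y z : Ev P (y - z) = Ev P y - Ev P z.
Proof. rewrite /Ev -sumrB; apply: eq_bigr => i _; by rewrite mulrBl mulrBr. Qed.

Lemma Ev_mulX (P : {poly KT}) y : Ev (P * 'X) y = Ev P (y * a).
Proof.
have hs : (size (P * 'X)%R <= (size P).+1)%N.
  apply: leq_trans (size_mul_leq _ _) _; by rewrite size_polyX addn2.
rewrite (Ev_ext y hs) big_ord_recl coefMX /= mul0r add0r /Ev.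
apply: eq_bigr => i _; by rewrite coefMX /= exprS mulrA.
Qed.

Lemma Ev_mulC (P : {poly KT}) (c : KT) y : Ev (P * c%:P) y = Ev P (val c * y).
Proof.
have hs : (size (P * c%:P)%R <= size P)%N.
  apply: leq_trans (size_mul_leq _ _) _.
  have := size_polyC_leq1 c; case: (size c%:P) => [|[|//]] _; rewrite ?addn0 ?addn1 //.
  exact: leq_pred.
rewrite (Ev_ext y hs) /Ev; apply: eq_bigr => i _; by rewrite coefMC /= !mulrA.
Qed.

Lemma Ev_mulXsubC (P : {poly KT}) (c : KT) y : Ev (P * ('X - c%:P)) y = Ev P (y * a - val c * y).
Proof. by rewrite mulrBr EvB Ev_mulX Ev_mulC Ev_yB. Qed.

Lemma Ev1 y : Ev 1 y = y.
Proof. by rewrite /Ev size_poly1 big_ord1 coefC /= expr0 mulr1 mul1r. Qed.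

Lemma Ev_Xn n y : Ev ('X^n) y = y * a ^+ n.
Proof.
rewrite /Ev size_polyXn big_ord_recr /= big1 ?add0r => [|i _].
  by rewrite coefXn eqxx /= mul1r.
by rewrite coefXn ltn_eqF //= mul0r.
Qed.


Lemma Ev_prod_inj (s : seq KT) (P : pred KT) :
  (forall x, P x -> forall z, z * a - val x * z = 0 -> z = 0) ->
  forall z, Ev (\prod_(x <- s | P x) ('X - x%:P)) z = 0 -> z = 0.
Proof.
move=> hP; elim: s => [|x s IH] z; first by rewrite big_nil Ev1.
rewrite big_cons; case: ifP => Px; last exact: IH.
rewrite mulrC Ev_mulXsubC => /IH; exact: hP.
Qed.

Lemma eigen : exists x : KT, x != ka /\ exists2 z : Dn, z != 0 & z * a = val x * z.
Proof.
apply: Classical_Prop.NNPP => hn.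
have hP : forall x, x != ka -> forall z, z * a - val x * z = 0 -> z = 0.
  move=> x hx z /eqP; rewrite subr_eq0 => /eqP hz; apply: Classical_Prop.NNPP => z0.
  apply: hn; exists x; split => //; exists z => //; exact/eqP.
have hall : forall y, Ev (\prod_(x | x != ka) ('X - x%:P)) (y * a - a * y) = 0.
  have aQ := congr1 val (expf_card ka); rewrite rmorphXn /= in aQ.
  move=> y; have := Ev_mulXsubC (\prod_(x | x != ka) ('X - x%:P)) ka y; rewrite /= => <-.
  have e : \prod_x ('X - x%:P) = ('X - ka%:P) * \prod_(x | x != ka) ('X - x%:P) by rewrite (bigD1 ka).
  rewrite mulrC -e -finField_genPoly EvB Ev_Xn.
  by rewrite -[X in Ev X _]expr1 Ev_Xn expr1 aQ subrr.
have := Ev_prod_inj hP (hall b); move/eqP; rewrite subr_eq0 => /eqP h.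
by move: hab; rewrite h eqxx.
Qed.

Section TSec.
Variables (lam z : Dn).
Hypotheses (lamK : lam \in Kl) (lam_neq : lam != a) (z0 : z != 0) (hz : z * a = lam * z).

Lemma z_pow_a i : z * a ^+ i = lam ^+ i * z.
Proof.
elim: i => [|i IH]; first by rewrite !expr0 mulr1 mul1r.
by rewrite exprSr mulrA IH -mulrA hz mulrA -exprSr.
Qed.

Lemma Kpow x n : x \in Kl -> x ^+ n \in Kl.
Proof. apply: pow_in; [exact: K1|exact: KM]. Qed.

Lemma conjK k : k \in Kl -> exists2 k', k' \in Kl & z * k = k' * z.
Proof.
move=> /ApdP [c ->]; exists (\sum_(i < N) (c i : nat)%:R * lam ^+ i).
  apply: sum_in; [exact: K0|exact: KD|] => i _; apply: KM; [exact: Knat|exact: Kpow].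
rewrite /evp mulr_sumr mulr_suml; apply: eq_bigr => i _.
by rewrite mulrA (commr_nat z) -mulrA z_pow_a mulrA.
Qed.

Lemma conjKn i k : k \in Kl -> exists2 k', k' \in Kl & z ^+ i * k = k' * z ^+ i.
Proof.
elim: i k => [|i IH] k hk; first by exists k; rewrite // expr0 mul1r mulr1.
have [k1 hk1 e1] := IH k hk.
have [k2 hk2 e2] := conjK hk1.
by exists k2 => //; rewrite exprS -mulrA e1 mulrA e2 -mulrA.
Qed.

Definition evT (f : {ffun 'I_N -> KT}) : Dn := \sum_(i < N) val (f i) * z ^+ i.
Definition Tl : seq Dn := [seq evT f | f <- enum {ffun 'I_N -> KT}].

Lemma TP u : reflect (exists f, u = evT f) (u \in Tl).
Proof.
apply: (iffP mapP) => [[f _ ->]|[f ->]]; first by exists f.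
by exists f; rewrite ?mem_enum.
Qed.

Lemma T0 : 0 \in Tl.
Proof. apply/TP; exists 0; rewrite /evT big1 // => i _; by rewrite ffunE mul0r. Qed.

Lemma TD u v : u \in Tl -> v \in Tl -> u + v \in Tl.
Proof.
move=> /TP [f ->] /TP [g ->]; apply/TP; exists (f + g).
rewrite /evT -big_split /=; apply: eq_bigr => i _; by rewrite ffunE /= mulrDl.
Qed.

Lemma T_mono k l : k \in Kl -> (l < N)%N -> k * z ^+ l \in Tl.
Proof.
move=> hk hl; apply/TP; exists [ffun i : 'I_N => if val i == l then (SeqSub hk : KT) else 0].
rewrite /evT (bigD1 (Ordinal hl)) //= big1 ?addr0.
  by rewrite ffunE /= eqxx.
move=> i /negbTE hi; rewrite ffunE; case: eqP => [e|_]; last by rewrite mul0r.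
have ei : i = Ordinal hl by apply: val_inj; rewrite /= e.
by move: hi; rewrite ei eqxx.
Qed.

Lemma TM u v : u \in Tl -> v \in Tl -> u * v \in Tl.
Proof.
move=> /TP [f ->] /TP [g ->]; rewrite /evT mulr_suml.
apply: sum_in; [exact: T0|exact: TD|] => i _; rewrite mulr_sumr.
apply: sum_in; [exact: T0|exact: TD|] => j _.
have [k' hk' e] := conjKn i (valP (g j)).
rewrite -mulrA (mulrA (z ^+ i)) e -!mulrA -exprD !mulrA (expr_modN _ z0).
apply: T_mono; first by apply: KM => //; exact: valP.
apply: ltn_pmod; exact: ltnW.
Qed.

Lemma T1 : 1 \in Tl.
Proof. have := T_mono K1 (ltnW N2); by rewrite expr0 mulr1. Qed.
Lemma TN u : u \in Tl -> - u \in Tl.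
Proof. apply: (opp_in hp); [exact: T0|exact: TD]. Qed.
Lemma TB u v : u \in Tl -> v \in Tl -> u - v \in Tl.
Proof. by move=> hu hv; apply: TD => //; apply: TN. Qed.

Lemma Tclosed : subring_closed (fun x : Dn => x \in Tl).
Proof. split; [exact: T1|exact: TB|exact: TM]. Qed.
Lemma Tdiv : divring_closed (fun x : Dn => x \in Tl).
Proof. split; [exact: T1|exact: TB|] => u v hu hv; apply: TM => //; apply: inv_in => //; [exact: T1|exact: TM]. Qed.

Definition TT := seq_sub Tl.
HB.instance Definition _ := SubType.on TT.
HB.instance Definition _ := Finite.on TT.
HB.instance Definition _ := GRing.SubChoice_isSubNzRing.Build Dn _ TT Tclosed.
HB.instance Definition _ := GRing.SubNzRing_isSubUnitRing.Build Dn _ TT Tdiv.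
Lemma TT_dom : GRing.integral_domain_axiom TT.
Proof.
move=> x y /eqP; rewrite -val_eqE /= => /eqP /domD [] h; apply/orP; [left|right];
  by rewrite -val_eqE /= h.
Qed.

Lemma Ta : a \in Tl.
Proof. have := T_mono Ka (ltnW N2); by rewrite expr0 mulr1. Qed.
Lemma Tz : z \in Tl.
Proof. have := T_mono K1 N2; by rewrite expr1 mul1r. Qed.

Lemma TSec_false : False.
Proof.
have := finDomain_mulrC TT_dom (SeqSub Ta : TT) (SeqSub Tz : TT).
move/(congr1 val) => /= e.
have : (a - lam) * z = 0 by rewrite mulrBl e hz subrr.
case/domD => [/eqP|/eqP]; last by rewrite (negbTE z0).
by rewrite subr_eq0 eq_sym (negbTE lam_neq).
Qed.
End TSec.

Lemma central_false : False.
Proof.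
have [x [hx [z z0 hz]]] := eigen.
apply: (@TSec_false (val x) z (valP x) _ z0 hz).
by apply: contra hx => /eqP e; apply/eqP/val_inj.
Qed.

End Central.

Lemma Dn_comm (x y : Dn) : x * y = y * x.
Proof. case: (boolP (x * y == y * x)) => [/eqP //| h]; case: (central_false h). Qed.

Definition Dc : Type := Dn.
HB.instance Definition _ := GRing.UnitRing.on Dc.
HB.instance Definition _ := GRing.PzRing_hasCommutativeMul.Build Dc Dn_comm.
Lemma Dc_dom : GRing.integral_domain_axiom Dc.
Proof. move=> x y /dom [] ->; rewrite eqxx ?orbT //. Qed.
HB.instance Definition _ := GRing.ComUnitRing_isIntegral.Build Dc Dc_dom.
Lemma Dc_field : GRing.field_axiom Dc.
Proof. by move=> x x0; rewrite qualifE. Qed.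
HB.instance Definition _ := GRing.UnitRing_isField.Build Dc Dc_field.

Lemma inf_list (T : eqType) : infinite_type T -> forall k, exists s : seq T, uniq s /\ size s = k.
Proof.
move=> inf; elim=> [|k [s [us ss]]]; first by exists [::].
have [x hx] : exists x, x \notin s.
  apply: Classical_Prop.NNPP => h; apply: inf; exists s => x.
  apply: Classical_Prop.NNPP => hx; apply: h; exists x; exact/negP.
by exists (x :: s); rewrite /= hx us ss.
Qed.

Lemma Herst_false : infinite_type R -> False.
Proof.
move=> inf; have [rs [urs srs]] := inf_list inf N.+2.
pose P0 : {poly Dc} := 'X^(N.+1) - 'X.
have sP : size P0 = N.+2.
  rewrite /P0 size_polyDl size_polyXn // size_polyN size_polyX; exact: ltnW.
have hr : all (root P0) (rs : seq Dc).
  apply/allP => x _; rewrite /root !hornerE /=.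
  case: (boolP (x == 0)) => [/eqP ->|x0]; first by rewrite expr0n subrr.
  by rewrite exprS (HN x0) mulr1 subrr.
have := @max_poly_roots _ P0 (rs : seq Dc).
rewrite -size_poly_eq0 sP srs ltnn => h; by have := h isT hr urs.
Qed.

End Herst.

Lemma pow_neq0 (R : pzRingType) (t : R) n : no_zero_divisors R -> (1:R) != 0 -> t != 0 -> t ^+ n != 0.
Proof.
move=> dom H1 t0; elim: n => [|n IH]; first by rewrite expr0.
rewrite exprS; apply/eqP => /dom [] /eqP; by [rewrite (negbTE t0)|rewrite (negbTE IH)].
Qed.

Lemma charp_structs (R : pzRingType) : ~ char_zero R -> no_zero_divisors R -> infinite_type R -> has_structs R.
Proof.
move=> nc0 dom inf.
have [p hp] : exists p, p.+1%:R = 0 :> R.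
  apply: Classical_Prop.NNPP => h; apply: nc0 => n hn; apply: h; by exists n.
have H1 : (1:R) != 0.
  apply/eqP => h; apply: inf; exists [:: 0] => x; by rewrite inE -[x]mulr1 h mulr0.
case: (Classical_Prop.classic (forall L, exists (t : R) d, (L <= size (undup (Apd p t d)))%N)) => [hL|hL].
  move=> L; have [t [d hd]] := hL L.
  have [A [B [C [uA uB uC gA [cl hC hB hB0 hs]]]]] := struct12 hp dom t d.
  exists A, B, C; split => //; split => //; exact: leq_trans hd hs.
exfalso.
have [L hL'] : exists L, forall (t : R) d, (size (undup (Apd p t d)) < L)%N.
  apply: Classical_Prop.NNPP => h; apply: hL => L.
  apply: Classical_Prop.NNPP => h2; apply: h; exists L => t d.
  rewrite ltnNge; apply/negP => h3; apply: h2; by exists t, d.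
have Hpow : forall t : R, t != 0 -> t ^+ (L`! * 2) = 1.
  move=> t t0.
  have : ~~ uniq [seq t ^+ i | i <- iota 0 L].
    apply/negP => u.
    have hsub : {subset [seq t ^+ i | i <- iota 0 L] <= undup (Apd p t L)}.
      move=> y /mapP [i]; rewrite mem_iota add0n => /andP [_ hi] ->.
      rewrite mem_undup; have := Apd_mono hp t 1 hi; by rewrite mul1r.
    have := uniq_leq_size u hsub; rewrite size_map size_iota => h.
    by have := hL' t L; rewrite ltnNge h.
  case/(uniqPn 0) => i [j [hij hj]]; rewrite size_map size_iota in hj.
  rewrite !(nth_map 0) ?size_iota //; last exact: ltn_trans hij hj.
  rewrite !nth_iota ?add0n //; last exact: ltn_trans hij hj.
  move=> eij.
  have e1 : t ^+ (j - i) = 1.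
    have : t ^+ i * (t ^+ (j - i) - 1) = 0.
      by rewrite mulrBr mulr1 -exprD subnKC ?(ltnW hij) // eij subrr.
    case/dom => [/eqP|/eqP]; first by rewrite (negbTE (pow_neq0 i dom H1 t0)).
    by rewrite subr_eq0 => /eqP.
  have /dvdnP [k hk] : (j - i %| L`!)%N.
    apply: dvdn_fact; rewrite subn_gt0 hij /=; apply: leq_trans (leq_subr _ _) _; exact: ltnW.
  by rewrite hk -mulnA mulnC !exprM e1 !expr1n.
apply: (@Herst_false R p hp dom (L`! * 2) _ Hpow H1 inf).
by have := fact_gt0 L; lia.
Qed.

Theorem proposition3p8 (R : pzRingType) :
  (char_zero R \/ (no_zero_divisors R /\ infinite_type R)) ->
  ~ ring_NLZB R.
Proof.
move=> H; apply: structs_not_NLZB.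
case: (Classical_Prop.classic (char_zero R)) => [c0|nc0]; first exact: c0_structs.
case: H => [//|[dom inf]]; exact: charp_structs.
Qed.
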